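(* The set $\mathcal{PES}(\mathbb C)$ of perfectly everywhere surjective functions $\mathbb C\to\mathbb C$ is strongly $2^{\mathfrak{c}}$-algebrable in the algebra $\mathbb C^{\mathbb C}$.
   Context: $\mathfrak{c}$ denotes the cardinality of $\mathbb R$. A perfect subset of $\mathbb C$ is a nonempty closed set with no isolated points. A function $f:\mathbb C\to\mathbb C$ is perfectly everywhere surjective if $f(P)=\mathbb C$ for every perfect subset $P\subset\mathbb C$. $\mathbb C^{\mathbb C}$ is the commutative algebra of all functions $\mathbb C\to\mathbb C$ with pointwise operations. A subset $E$ of a commutative algebra $B$ is strongly $\kappa$-algebrable if there exists a set $X=\{x_\alpha:\alpha<\kappa\}\subset B$ of distinct elements such that the set of all monomials $x_{\alpha_1}^{k_1}\cdots x_{\alpha_n}^{k_n}$ ($n\ge1$, distinct $\alpha_i$, $k_i\ge1$) is linearly independent and every nontrivial linear combination of such monomials belongs to $E$ (i.e. $X$ freely generates an algebra contained in $E\cup\{0\}$). *)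

(* Defs.v *)
From HB Require Import structures.
From mathcomp Require Import all_boot all_order all_algebra.
From mathcomp Require Import all_classical all_reals all_analysis.
From mathcomp Require Import complex.
Set Implicit Arguments. Unset Strict Implicit. Unset Printing Implicit Defensive.
Import Order.TTheory GRing.Theory Num.Theory.
Import numFieldNormedType.Exports.
Local Open Scope classical_set_scope.
Local Open Scope ring_scope.

Definition perfect_subset {T : topologicalType} (P : set T) : Prop :=
  P !=set0 /\ perfect_set P.

Definition PES {T : topologicalType} (f : T -> T) : Prop :=
  forall P : set T, perfect_subset P -> f @` P = setT.

Definition monomial {I T : Type} {K : comNzRingType} (x : I -> T -> K)
  (n : nat) (a : 'I_n -> I) (e : {ffun 'I_n -> nat}) : T -> K :=
  fun z => \prod_(i < n) (x (a i) z) ^+ (e i).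

(* E (a subset of the commutative algebra K^T) is strongly kappa-algebrable,
   where kappa is the cardinality of the index type I: there are distinct
   x_alpha (alpha in I) such that every nontrivial linear combination of
   pairwise distinct (nonconstant) monomials in distinct generators is
   nonzero (linear independence of the monomials) and lies in E. *)
Definition strongly_algebrable (I T : Type) (K : comNzRingType)
  (E : set (T -> K)) : Prop :=
  exists x : I -> (T -> K), injective x /\
    forall (n : nat) (a : 'I_n -> I), injective a ->
    forall s : seq ({ffun 'I_n -> nat} * K),
      uniq (map fst s) ->
      all (fun p => p.1 != [ffun=> 0%N]) s ->
      has (fun p => p.2 != 0) s ->
      let f := fun z => \sum_(p <- s) p.2 * monomial x a p.1 z in
      f <> (fun _ => 0) /\ E f.

(* Main.v *)
Require Import Defs.
Set Implicit Arguments. Unset Strict Implicit. Unset Printing Implicit Defensive.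
From HB Require Import structures.
From mathcomp Require Import all_boot all_order all_algebra.
From mathcomp Require Import all_classical all_reals all_analysis.
From mathcomp Require Import complex wochoice lra.
Import Order.TTheory GRing.Theory Num.Theory.
Import numFieldNormedType.Exports.
Local Open Scope classical_set_scope.
Local Open Scope ring_scope.
Local Open Scope complex_scope.
Notation cRe := (@complex.Re _). Notation cIm := (@complex.Im _).

Section Bern.
Variables (X : choiceType) (D : Type) (Pf : set (set X)) (d0 : D) (x0 : X).
Local Notation T := {classic (set X * D)%type}.

Section WO.
Variable le : rel T.
Hypothesis wo : well_order le.

Lemma wo_refl x : le x x.
Proof.
have [|z [[/eqP -> lb] _]] := @wo (pred1 x); first by exists x; rewrite inE.
by apply: lb; rewrite inE.
Qed.

Lemma wo_total x y : le x y || le y x.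
Proof.
have [|z [[zin lb] _]] := @wo [pred u | (u == x) || (u == y)].
  by exists x; rewrite inE eqxx.
move: zin lb; rewrite inE => /orP[]/eqP -> lb.
  by rewrite lb // inE eqxx orbT.
by rewrite (lb x) ?orbT // inE eqxx.
Qed.

Lemma wo_anti x y : le x y -> le y x -> x = y.
Proof.
move=> xy yx.
have [|z [_ uq]] := @wo [pred u | (u == x) || (u == y)].
  by exists x; rewrite inE eqxx.
rewrite -(uq x); last first.
  split; first by rewrite inE eqxx.
  by move=> u; rewrite inE => /orP[]/eqP ->; rewrite ?wo_refl.
apply: uq; split; first by rewrite inE eqxx orbT.
by move=> u; rewrite inE => /orP[]/eqP ->; rewrite ?wo_refl.
Qed.

Definition wlt (a b : T) := le a b && (a != b).

Lemma wlt_wf : well_founded wlt.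
Proof.
move=> a; apply: contrapT => nA.
have [|z [[zin lb] _]] := @wo [pred u | `[< ~ Acc wlt u >]].
  by exists a; rewrite inE.
move: zin; rewrite inE => zA; apply: zA; constructor => y /andP[yz nyz].
apply: contrapT => nAy.
have zy : le z y by apply: lb; rewrite inE.
by move: nyz; rewrite (wo_anti yz zy) eqxx.
Qed.

Lemma wlt_total x y : x != y -> wlt x y \/ wlt y x.
Proof.
move=> nxy; case/orP: (wo_total x y) => h; [left|right]; rewrite /wlt h //.
by rewrite eq_sym.
Qed.

Section Build.
Variables (W : T -> Prop) (req : T -> (set X * D)%type).
Hypothesis W1 : forall P d, Pf P -> exists v, W v /\ req v = (P, d).
Hypothesis W2 : forall w, W w -> forall P, Pf P -> forall h : T -> X,
  exists x, P x /\ forall v, wlt v w -> h v <> x.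

Definition valid w := W w /\ Pf (req w).1.

Definition extf w (f : forall v, wlt v w -> X) : T -> X :=
  fun v => match pselect (wlt v w) with left p => f v p | right _ => x0 end.

Definition stepF (w : T) (f : forall v, wlt v w -> X) : X :=
  if pselect (valid w) then
    xget x0 [set x | (req w).1 x /\ forall v, wlt v w -> extf f v <> x]
  else x0.

Definition pt : T -> X := Fix wlt_wf (fun _ => X) stepF.

Lemma ptE w : pt w = @stepF w (fun v _ => pt v).
Proof.
rewrite /pt Fix_eq //= => x f g fg; rewrite /stepF.
suff -> : extf f = extf g by [].
by apply: funext => v; rewrite /extf; case: pselect.
Qed.

Lemma pt_valid w : valid w ->
  (req w).1 (pt w) /\ forall v, wlt v w -> pt v <> pt w.
Proof.
move=> vw.
set S := [set x | (req w).1 x /\ forall v, wlt v w -> @extf w (fun v _ => pt v) v <> x].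
have E : pt w = xget x0 S.
  by rewrite {1}ptE /stepF; case: ifP => // ; case: pselect.
have : S (xget x0 S).
  have [x Hx] := W2 (proj1 vw) (proj2 vw) (@extf w (fun v _ => pt v)).
  by apply: xgetPex; exists x.
rewrite -E => -[H1 H2]; split => // v vw'; move: (H2 v vw'); rewrite /extf.
by case: pselect => [_ //|/(_ vw') //].
Qed.

Lemma build : exists psi : X -> D, forall P, Pf P -> forall d,
  exists x, P x /\ psi x = d.
Proof.
pose psi x := match pselect (exists w, valid w /\ pt w = x) with
  | left e => (req (proj1_sig (cid e))).2 | right _ => d0 end.
exists psi => P PP d.
have [v [Wv rv]] := W1 d PP.
have vv : valid v by split => //; rewrite rv.
exists (pt v); split; first by have [+ _] := pt_valid vv; rewrite rv.
rewrite /psi; case: pselect => [e|]; last by move=> []; exists v.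
case: (cid e) => w [vw pw] /=.
have -> : w = v; last by rewrite rv.
apply: contrapT => /eqP nwv; case: (wlt_total nwv) => h.
- by have [_ /(_ w h)] := pt_valid vv.
- by have [_ /(_ v h)] := pt_valid vw; rewrite pw.
Qed.
End Build.
End WO.

Hypothesis big : forall P, Pf P -> exists g : X -> (set X * D)%type,
  forall P' d, Pf P' -> exists x, P x /\ g x = (P', d).

Lemma bernstein : exists psi : X -> D, forall P, Pf P -> forall d,
  exists x, P x /\ psi x = d.
Proof.
have [le wo] := well_ordering_principle T.
pose S (w : T) := exists P, Pf P /\ exists h : T -> X,
  forall x, P x -> exists v, wlt le v w /\ h v = x.
case: (pselect (exists w, S w)) => [[w1 Sw1]|nS].
- have [|w0 [[w0in lb] _]] := @wo [pred u | `[< S u >]].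
    by exists w1; rewrite inE.
  move: w0in; rewrite inE => -[P0 [PP0 [h0 Hh0]]].
  have [g0 Hg0] := big PP0.
  apply: (@build le wo (fun v => wlt le v w0) (fun v => g0 (h0 v))).
    move=> P d PP; have [x [P0x gx]] := Hg0 P d PP.
    by have [v [vw hv]] := Hh0 x P0x; exists v; rewrite hv.
  move=> w ww0 P PP h; apply: contrapT => nex.
  have Sw : S w.
    exists P; split => //; exists h => x Px; apply: contrapT => nv.
    by apply: nex; exists x; split => // v vw hvx; apply: nv; exists v.
  have : le w0 w by apply: lb; rewrite inE.
  move: ww0 => /andP[ww0 nw] /(wo_anti wo ww0) eq.
  by rewrite eq eqxx in nw.
- apply: (@build le wo (fun _ => True) id).
    by move=> P d _; exists (P, d).
  move=> w _ P PP h; apply: contrapT => nex; apply: nS; exists w.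
  exists P; split => //; exists h => x Px; apply: contrapT => nv.
  by apply: nex; exists x; split => // v vw hvx; apply: nv; exists v.
Qed.
End Bern.

Section CH.
Variable R : realType.
Implicit Types (w z : R[i]) (a : R).

Lemma normC_real a : `|a%:C| = `|a|%:C :> R[i].
Proof. by rewrite normc_def /= expr0n addr0 sqrtr_sqr. Qed.

Lemma norm_i : `|'i%C| = 1 :> R[i].
Proof. by rewrite normc_def /= expr0n add0r expr1n sqrtr1. Qed.

Lemma ReB w z : cRe (w - z) = cRe w - cRe z.
Proof. by case: w => ? ?; case: z => ? ?. Qed.
Lemma ImB w z : cIm (w - z) = cIm w - cIm z.
Proof. by case: w => ? ?; case: z => ? ?; simpc. Qed.

Lemma Re_le_norm w : `|cRe w|%:C <= `|w|.
Proof. exact: normc_ge_Re. Qed.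

Lemma Im_le_norm w : `|cIm w|%:C <= `|w|.
Proof.
have := normc_ge_Re (w * 'i%C); rewrite ReiNIm normrN normrM norm_i mulr1.
by [].
Qed.

Lemma norm_le_ReIm w : `|w| <= (`|cRe w| + `|cIm w|)%:C.
Proof.
rewrite {1}[w]complexE; apply: le_trans (ler_normD _ _) _.
by rewrite normrM norm_i mul1r !normC_real rmorphD.
Qed.

Lemma ltC_Re w a : `|w| < a%:C -> `|cRe w| < a.
Proof. by move=> h; rewrite -ltcR; exact: le_lt_trans (Re_le_norm w) h. Qed.
Lemma ltC_Im w a : `|w| < a%:C -> `|cIm w| < a.
Proof. by move=> h; rewrite -ltcR; exact: le_lt_trans (Im_le_norm w) h. Qed.

Lemma ReIm_ltC w a b : `|cRe w| <= a -> `|cIm w| <= a -> a + a < b -> `|w| < b%:C.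
Proof.
move=> ha hb hab; apply: le_lt_trans (norm_le_ReIm w) _.
by rewrite ltcR; apply: le_lt_trans hab; apply: lerD.
Qed.

Lemma posC (e : R[i]) : 0 < e -> e = (cRe e)%:C /\ 0 < cRe e.
Proof.
by case: e => a b; rewrite ltcE /= => /andP[/eqP -> h]; split.
Qed.
End CH.

Section CS.
Variable R : realType.
Variable P : set R[i]^o.
Hypothesis Pcl : closed P.
Hypothesis Plim : limit_point P = P.
Variable p0 : R[i].
Hypothesis Pp0 : P p0.

Definition inbox (N : R[i] * R) (z : R[i]) :=
  `|cRe z - cRe N.1| <= N.2 /\ `|cIm z - cIm N.1| <= N.2.
Definition okN (N : R[i] * R) := P N.1 /\ 0 < N.2.
Definition nextpt (N : R[i] * R) : R[i] :=
  xget N.1 [set y : R[i] | P y /\ y != N.1 /\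
    `|cRe N.1 - cRe y| < N.2 / 2 /\ `|cIm N.1 - cIm y| < N.2 / 2].
Definition dst (N : R[i] * R) := `|cRe N.1 - cRe (nextpt N)| + `|cIm N.1 - cIm (nextpt N)|.
Definition child (N : R[i] * R) (bt : bool) : R[i] * R :=
  (if bt then nextpt N else N.1, Num.min (N.2 / 2) (dst N / 8)).

Lemma nextptP N : okN N -> let y := nextpt N in P y /\ y != N.1 /\
    `|cRe N.1 - cRe y| < N.2 / 2 /\ `|cIm N.1 - cIm y| < N.2 / 2.
Proof.
move=> [PN hN].
set S := [set y : R[i] | P y /\ y != N.1 /\
    `|cRe N.1 - cRe y| < N.2 / 2 /\ `|cIm N.1 - cIm y| < N.2 / 2].
suff : S (xget N.1 S) by [].
apply: xgetPex.
have : limit_point P N.1 by rewrite Plim.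
have h2 : 0 < (N.2 / 2)%:C :> R[i] by rewrite ltcR divr_gt0.
move=> /(_ _ (@nbhsx_ballx _ (R[i]^o) (N.1 : R[i]^o) _ h2)) [y [ny Py yb]].
exists y; split => //; split => //.
by move: yb; rewrite /ball /= => bl; split; [move: (ltC_Re bl)|move: (ltC_Im bl)];
  rewrite ?ReB ?ImB.
Qed.

Lemma dst_gt0 N : okN N -> 0 < dst N.
Proof.
move=> oN; have [_ [ny _]] := nextptP oN.
rewrite /dst lt_neqAle addr_ge0 // andbT eq_sym paddr_eq0 // !normr_eq0.
apply/negP => /andP[/eqP e1 /eqP e2]; move/eqP: ny; apply.
move: e1 e2; case: (nextpt N) => a b; case: (N.1) => c d /= e1 e2.
by congr Complex; apply/eqP; rewrite eq_sym -subr_eq0; apply/eqP.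
Qed.

Lemma child_ok N bt : okN N -> okN (child N bt).
Proof.
move=> oN; have [Py _] := nextptP oN; have dp := dst_gt0 oN.
split; first by case: bt; [exact: Py | exact: oN.1].
rewrite /child /= lt_min; apply/andP; split; have := oN.2; lra.
Qed.

Lemma child_h N bt : okN N -> (child N bt).2 <= N.2 / 2.
Proof. by move=> _; rewrite /child /= ge_min lexx. Qed.

Lemma child_in N bt z : okN N -> inbox (child N bt) z -> inbox N z.
Proof.
move=> oN; have [_ [_ [hr hi]]] := nextptP oN.
have h0 := oN.2; have := child_h bt oN.
rewrite /inbox; case: bt => /= hh [h1 h2].
- split.
  + apply: le_trans (ler_distD (cRe (nextpt N)) _ _) _.
    by rewrite distrC in hr; lra.
  + apply: le_trans (ler_distD (cIm (nextpt N)) _ _) _.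
    by rewrite distrC in hi; lra.
- by split; lra.
Qed.

Lemma child_disj N z : okN N -> inbox (child N false) z -> inbox (child N true) z -> False.
Proof.
move=> oN; have dp := dst_gt0 oN.
have hm : (child N false).2 <= dst N / 8 by rewrite /child /= ge_min lexx orbT.
have et : (child N true).2 = (child N false).2 by [].
rewrite /inbox et; have -> : (child N true).1 = nextpt N by [].
have -> : (child N false).1 = N.1 by [].
move: hm; set mm := (child N false).2 => hm [a1 a2] [b1 b2].
have e1 := ler_distD (cRe z) (cRe N.1) (cRe (nextpt N)).
have e2 := ler_distD (cIm z) (cIm N.1) (cIm (nextpt N)).
rewrite distrC in a1; rewrite distrC in a2.
move: dp hm; rewrite /dst; lra.
Qed.

Fixpoint node (b : nat -> bool) (k : nat) : R[i] * R :=
  if k is k'.+1 then child (node b k') (b k') else (p0, 1).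

Lemma node_ok b k : okN (node b k).
Proof. by elim: k => [|k IH] /=; [split | exact: child_ok]. Qed.

Lemma node_h b k : (node b k).2 * k.+1%:R <= 1.
Proof.
elim: k => [|k IH]; first by rewrite /= mul1r.
change ((child (node b k) (b k)).2 * k.+2%:R <= 1).
have hc := child_h (b k) (node_ok b k).
have h0 := (node_ok b k).2.
have hc0 : 0 <= (child (node b k) (b k)).2 := ltW (child_ok _ (node_ok b k)).2.
have e1 : k.+1%:R = k%:R + 1 :> R by rewrite -[k.+1]addn1 natrD.
have e2 : k.+2%:R = k%:R + 2 :> R by rewrite -[k.+2]addn2 natrD.
rewrite e1 in IH; rewrite e2.
move: IH hc hc0 h0.
set u := (child _ _).2; set v := (node b k).2 => IH hc hc0 h0.
have k0 : 0 <= k%:R :> R by [].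
have p1 : 0 <= (v / 2 - u) * (k%:R + 2%:R) by apply: mulr_ge0; lra.
have p2 : 0 <= v * k%:R by apply: mulr_ge0; lra.
nra.
Qed.

Lemma inbox_center N : 0 <= N.2 -> inbox N N.1.
Proof. by move=> h; rewrite /inbox !subrr normr0. Qed.

Lemma node_nest b k l z : (k <= l)%N -> inbox (node b l) z -> inbox (node b k) z.
Proof.
move=> /subnK <-; elim: (l - k)%N => [|m IH] //= h.
by apply: IH; apply: child_in h; exact: node_ok.
Qed.

Lemma nested_sup (f g : nat -> R) : (forall k, 0 <= g k) ->
  (forall k l, (k <= l)%N -> `|f l - f k| <= g k) ->
  forall k, `|sup (range (fun l => f l - g l)) - f k| <= g k.
Proof.
move=> g0 H k; set S := range _.
have ub : forall m, ubound S (f m + g m).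
  move=> m _ [l _ <-]; case: (leqP m l) => ml.
  - have := H _ _ ml; rewrite ler_distl => /andP[_ h]; have := g0 l; lra.
  - have := H _ _ (ltnW ml); rewrite ler_distl => /andP[h _]; have := g0 m; lra.
have hs : has_ubound S by exists (f 0%N + g 0%N); exact: ub.
rewrite ler_distl; apply/andP; split.
- by apply: ub_le_sup => //; exists k.
- by apply: ge_sup; [exists (f 0%N - g 0%N); exists 0%N | exact: ub].
Qed.

Definition kap (b : nat -> bool) : R[i] :=
  (sup (range (fun l => cRe (node b l).1 - (node b l).2))) +i*
  (sup (range (fun l => cIm (node b l).1 - (node b l).2))).

Lemma kap_in b k : inbox (node b k) (kap b).
Proof.
have g0 : forall k, 0 <= (node b k).2 by move=> m; exact: ltW (node_ok b m).2.
have H k' l : (k' <= l)%N -> inbox (node b k') (node b l).1.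
  by move=> kl; apply: node_nest kl _; apply: inbox_center.
split.
- by apply: (nested_sup g0) => k' l /H [].
- by apply: (nested_sup g0) => k' l /H [].
Qed.

Lemma kapP b : P (kap b).
Proof.
apply: Pcl => U /nbhs_ballP [e e0 He].
have [eE ep] := posC e0.
set eps := cRe e in eE ep.
have [k hk] : exists k : nat, 4 / eps < k.+1%:R.
  exists (Num.Def.archi_bound (4 / eps)).
  have h4 : 0 <= 4 / eps by apply: ltW; apply: divr_gt0 => //; lra.
  apply: lt_le_trans (archi_boundP h4) _; by rewrite ler_nat.
exists (node b k).1; split; first exact: (node_ok b k).1.
apply: He; rewrite /ball /= eE.
have [h1 h2] := kap_in b k.
have hh := node_h b k; have h0 := (node_ok b k).2.
apply: (@ReIm_ltC _ _ (node b k).2); [by rewrite ReB | by rewrite ImB |].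
move: hk; rewrite ltr_pdivrMr // => hk.
set v := (node b k).2 in hh h0 *; set m := k.+1%:R in hk hh *.
have m0 : 0 < m by rewrite /m ltr0n.
rewrite -(ltr_pM2r m0); lra.
Qed.

Lemma node_eq b b' k : (forall j, (j < k)%N -> b j = b' j) -> node b k = node b' k.
Proof.
elim: k => [|k IH] //= h; rewrite IH ?h // => j jk; apply: h; exact: ltnW.
Qed.

Lemma kap_inj : injective kap.
Proof.
move=> b b' e; apply: funext => j; apply: contrapT => nb.
have ex : exists j, b j != b' j by exists j; apply/eqP.
case: (ex_minnP ex) => m bm mmin.
have eq : node b m = node b' m.
  apply: node_eq => i im; apply/eqP; apply/negPn/negP => ne.
  by have := mmin _ ne; rewrite leqNgt im.
have k1 := kap_in b m.+1; have k2 := kap_in b' m.+1.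
move: k1 k2; rewrite /= -eq e.
case: (b m) bm; case: (b' m) => //= _ h1 h2.
- exact: child_disj (node_ok b m) h2 h1.
- exact: child_disj (node_ok b m) h1 h2.
Qed.
End CS.

Section Closed.
Variable R : realType.

Definition bq (n : nat) : set R[i]^o :=
  match @unpickle (rat * rat * rat)%type n with
  | Some (x, y, r) => ball ((ratr x : R) +i* (ratr y : R) : R[i]^o) ((ratr r : R)%:C)
  | None => set0 end.

Definition decC (b : nat -> bool) : set R[i]^o :=
  ~` \bigcup_(n in [set n | b n]) bq n.

Lemma rat_near (x d : R) : 0 < d -> exists q : rat, `|ratr q - x| < d.
Proof.
move=> d0; have xd : x - d < x + d by lra.
have [q] := rat_in_itvoo xd; rewrite in_itv /= => /andP[h1 h2].
by exists q; rewrite ltr_distl; apply/andP; split; lra.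
Qed.

Lemma decC_onto (P : set R[i]^o) : closed P -> exists b, decC b = P.
Proof.
move=> cP; exists (fun n => `[< bq n `<=` ~` P >]).
apply/seteqP; split => z; last first.
  move=> Pz [n /= /asboolP bn bz]; exact: (bn z bz).
move=> dz; apply: contrapT => nPz; apply: dz.
have : nbhs (z : R[i]^o) (~` P) by apply: open_nbhs_nbhs; split => //; exact: closed_openC.
move=> /nbhs_ballP [e e0 He].
have [eE ep] := posC e0; set eps := cRe e in eE ep.
have e8 : 0 < eps / 8 by lra.
have [q1 h1] := rat_near (cRe z) e8.
have [q2 h2] := rat_near (cIm z) e8.
have rr : eps / 4 < eps / 2 by lra.
have [r] := rat_in_itvoo rr; rewrite in_itv /= => /andP[r1 r2].
set c : R[i] := (ratr q1 : R) +i* (ratr q2 : R).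
have cz : `|c - z| < (ratr r : R)%:C.
  apply: (@ReIm_ltC _ _ (eps / 8)); rewrite ?ReB ?ImB /=; [exact: ltW | exact: ltW | lra].
have bqE : bq (pickle (q1, q2, r)) = ball (c : R[i]^o) ((ratr r : R)%:C).
  by rewrite /bq pickleK.
exists (pickle (q1, q2, r)); last by rewrite bqE.
rewrite /= asboolE bqE => y cy; apply: He; rewrite /ball /=.
apply: le_lt_trans (ler_distD c _ _) _.
rewrite eE distrC.
apply: lt_le_trans (ltrD cz cy) _; rewrite -rmorphD lecR; lra.
Qed.
End Closed.

Section Dec.
Variable R : realType.

Definition rq (n : nat) : R :=
  match @unpickle rat n with Some q => ratr q | None => 0 end.

Lemma rqE q : rq (pickle q) = ratr q.
Proof. by rewrite /rq pickleK. Qed.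

Definition surjR (b : nat -> bool) : R := sup [set rq n | n in [set n | b n]].

Lemma surjR_onto x : exists b, surjR b = x.
Proof.
exists (fun n => rq n < x); rewrite /surjR.
set S := [set rq n | n in _].
have ubS : ubound S x by move=> _ [n /= hn <-]; exact: ltW.
have neS : S !=set0.
  have hx : x - 1 < x by rewrite ltrBlDr ltrDl.
  have [q' ] := rat_in_itvoo hx; rewrite in_itv /= => /andP[_ q'x].
  by exists (ratr q'); exists (pickle q'); rewrite /= rqE.
apply: le_anti; rewrite ge_sup //=.
rewrite leNgt; apply/negP => sx.
have [q] := rat_in_itvoo sx; rewrite in_itv /= => /andP[sq qx].
have : S (ratr q) by exists (pickle q); rewrite /= rqE.
move/(ub_le_sup (ex_intro _ x ubS)); rewrite leNgt sq //.
Qed.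

Definition split2 (b : nat -> bool) (j : nat) : nat -> bool :=
  fun k => b (pickle (j, k)).
Definition merge (s : nat -> nat -> bool) : nat -> bool :=
  fun m => if @unpickle (nat * nat)%type m is Some (j, k) then s j k else false.
Lemma split2_merge s j : split2 (merge s) j = s j.
Proof. by apply: funext => k; rewrite /split2 /merge pickleK. Qed.

Definition surjC (b : nat -> bool) : R[i] :=
  (surjR (split2 b 0%N)) +i* (surjR (split2 b 1%N)).

Lemma surjC_onto z : exists b, surjC b = z.
Proof.
case: z => x y.
have [b0 <-] := surjR_onto x; have [b1 <-] := surjR_onto y.
exists (merge (fun j => if j == 0%N then b0 else b1)).
by rewrite /surjC !split2_merge.
Qed.

Definition invC (z : R[i]) : nat -> bool := proj1_sig (cid (surjC_onto z)).
Lemma invCK z : surjC (invC z) = z.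
Proof. by rewrite /invC; case: cid. Qed.

Definition dnat (b : nat -> bool) : nat := xget 0%N [set k | b k].
Lemma dnatE m : dnat (fun k => k == m) = m.
Proof.
rewrite /dnat; have : [set k | k == m] (xget 0%N [set k | k == m]).
  by apply: xgetPex; exists m => /=.
by move=> /= /eqP.
Qed.

Definition Gam (b : nat -> bool) (A : set R[i]) : R[i] :=
  let m := dnat (split2 b 0) in
  let Fp j := surjC (split2 b j.*2.+1) in
  let V j := surjC (split2 b j.*2.+2) in
  V (pickle [seq `[< A (Fp j) >] | j <- iota 0 m]).

Lemma decoder_gen n (a : 'I_n -> set R[i]) : injective a ->
  forall v : 'I_n -> R[i], exists b, forall i, Gam b (a i) = v i.
Proof.
move=> ia v.
pose sep i j := xget 0 [set z | ~ (a i z <-> a j z)].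
have sepP i j : i != j -> ~ (a i (sep i j) <-> a j (sep i j)).
  move=> nij; have : [set z | ~ (a i z <-> a j z)] (sep i j).
    apply: xgetPex; apply: contrapT => nex; move/eqP: nij; apply.
    apply: ia; apply: funext => z; apply: propext.
    by apply: contrapT => nz; apply: nex; exists z.
  by [].
pose L := [seq sep p.1 p.2 | p <- enum (@predT ('I_n * 'I_n)%type)].
pose pat (A : set R[i]) := [seq `[< A z >] | z <- L].
have patinj i j : pat (a i) = pat (a j) -> i = j.
  move=> e; apply: contrapT => /eqP nij; apply: (sepP i j nij).
  have : sep i j \in L.
    have : (i, j) \in enum (@predT ('I_n * 'I_n)%type) by rewrite mem_enum.
    by move/(map_f (fun p => sep p.1 p.2)).
  move/eqP: e; rewrite eq_sym => /eqP/esym/eq_in_map/[apply] /= h.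
  by split => H; [have := asboolT H; rewrite h => /asboolP | have := asboolT H; rewrite -h => /asboolP].
pose V k := if [pick i | pickle (pat (a i)) == k] is Some i then v i else 0.
have VE i : V (pickle (pat (a i))) = v i.
  rewrite /V; case: pickP => [j /eqP/(pcan_inj pickleK)/patinj -> //|/(_ i)].
  by rewrite eqxx.
pose s j := if j == 0%N then (fun k => k == size L)
  else if odd j then invC (nth 0 L j./2) else invC (V (j.-1)./2).
have h0 : dnat (split2 (merge s) 0) = size L by rewrite split2_merge dnatE.
have hF j : surjC (split2 (merge s) j.*2.+1) = nth 0 L j.
  by rewrite split2_merge /s /= odd_double /= uphalf_double invCK.
have hV j : surjC (split2 (merge s) j.*2.+2) = V j.
  by rewrite split2_merge /s /= odd_double /= uphalf_double invCK.
exists (merge s) => i; rewrite /Gam h0 hV.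
have -> : [seq `[< a i (surjC (split2 (merge s) j.*2.+1)) >] | j <- iota 0 (size L)] = pat (a i).
  rewrite /pat -{2}(mkseq_nth 0 L) /mkseq -map_comp; apply: eq_map => j /=.
  by rewrite hF.
exact: VE.
Qed.
End Dec.

Section Alg.
Variable F : closedFieldType.

Lemma uniq_fst (A B : eqType) (s : seq (A * B)) p q :
  uniq (map fst s) -> p \in s -> q \in s -> p.1 = q.1 -> p = q.
Proof.
elim: s => //= x s IH /andP[nx us].
rewrite !inE => /orP[/eqP->|ps] /orP[/eqP->|qs] e //.
- by move: nx; rewrite e (map_f fst qs).
- by move: nx; rewrite -e (map_f fst ps).
- exact: IH.
Qed.

Section Dg.
Variable B : nat.
Hypothesis B0 : (0 < B)%N.

Definition dg n (e : 'I_n -> nat) := (\sum_(i < n) e i * B ^ i)%N.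

Lemma dg_inj n (e e' : 'I_n -> nat) : (forall i, e i < B)%N -> (forall i, e' i < B)%N ->
  dg e = dg e' -> forall i, e i = e' i.
Proof.
elim: n e e' => [|n IH] e e' he he' de i; first by case: i.
move: de; rewrite /dg !big_ord_recl /= !expn0 !muln1.
have sh : forall f : 'I_n.+1 -> nat, (\sum_(i < n) f (lift ord0 i) * B ^ (bump 0 i) =
   B * \sum_(i < n) f (lift ord0 i) * B ^ i)%N.
  move=> f; rewrite big_distrr /=; apply: eq_bigr => j _.
  by rewrite /bump /= add1n expnS mulnCA.
rewrite !sh => de.
have e0 : e ord0 = e' ord0.
  have := congr1 (fun m => m %% B)%N de.
  by rewrite [(e ord0 + _)%N]addnC [(e' ord0 + _)%N]addnC !(mulnC B) !modnMDl !modn_small.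
move: de; rewrite e0 => /addnI /eqP; rewrite eqn_pmul2l // => /eqP de.
have := IH (fun j => e (lift ord0 j)) (fun j => e' (lift ord0 j)) (fun j => he _)
  (fun j => he' _) de.
by case: (unliftP ord0 i) => [j ->|->] // /(_ j).
Qed.
End Dg.

Lemma poly_surj_gen n (s : seq ({ffun 'I_n -> nat} * F)) :
  uniq (map fst s) -> all (fun p => p.1 != [ffun=> 0%N]) s ->
  has (fun p => p.2 != 0) s -> forall w : F, exists v : 'I_n -> F,
  \sum_(p <- s) p.2 * \prod_(i < n) (v i) ^+ (p.1 i) = w.
Proof.
move=> us nz /hasP[p0 p0s p0nz] w.
pose B := ((\max_(p <- s) \max_(i < n) p.1 i)%N).+1.
have B0 : (0 < B)%N by [].
have hB : forall p, p \in s -> forall i, (p.1 i < B)%N.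
  move=> p ps i; rewrite ltnS.
  apply: (@leq_trans (\max_(i < n) p.1 i)%N); first exact: leq_bigmax.
  by apply: leq_bigmax_seq.
pose q := \sum_(p <- s) p.2 *: 'X^(dg B p.1).
have qE : forall t, q.[t] = \sum_(p <- s) p.2 * \prod_(i < n) (t ^+ (B ^ i)) ^+ (p.1 i).
  move=> t; rewrite /q horner_sum; apply: eq_bigr => p _.
  rewrite hornerZ hornerXn; congr (_ * _).
  rewrite /dg -prodrXr; apply: eq_bigr => i _; by rewrite -exprM mulnC.
pose d0 := dg B p0.1.
have d0pos : (0 < d0)%N.
  have /allP/(_ p0 p0s) := nz; apply: contraR; rewrite -eqn0Ngt => /eqP.
  rewrite /d0 /dg => /eqP; rewrite sum_nat_eq0 => /forallP h.
  apply/eqP/ffunP => i; rewrite ffunE; move: (h i) => /implyP /(_ isT).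
  by rewrite muln_eq0 expn_eq0 (negbTE (lt0n_neq0 B0)) orbF => /eqP.
have qc : q`_d0 = p0.2.
  rewrite /q coef_sum (bigD1_seq p0) //=; last exact: map_uniq us.
  rewrite coefZ coefXn eqxx mulr1 big_seq_cond big1 ?addr0 // => p /andP[ps np].
  rewrite coefZ coefXn; case: eqP; last by rewrite mulr0.
  move=> e; exfalso; move/eqP: np; apply.
  apply: (uniq_fst us) => //; apply/ffunP => i.
  exact: (dg_inj B0 (hB p ps) (hB p0 p0s) (esym e)).
have : size (q - w%:P) != 1%N.
  have : (q - w%:P)`_d0 != 0.
    by rewrite coefB coefC (negbTE (lt0n_neq0 d0pos)) subr0 qc.
  move=> h; have hs : (d0 < size (q - w%:P)%R)%N.
    by rewrite ltnNge; apply: contra h => /(nth_default 0) ->.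
  rewrite neq_ltn; apply/orP; right; exact: leq_ltn_trans hs.
move/closed_rootP => [t /rootP].
rewrite hornerD hornerN hornerC => /eqP; rewrite subr_eq0 => /eqP qt.
by exists (fun i => t ^+ (B ^ i)); rewrite -qE.
Qed.
End Alg.

Lemma perfectT_gen (R : realType) : perfect_subset [set: R[i]^o].
Proof.
split; first by exists 0.
split; first exact: closedT.
apply/seteqP; split => // z _ U /nbhs_ballP [e /= e0 He].
have e20 : 0 < e / 2 :> R[i] by rewrite divr_gt0.
exists (z + e / 2); split => //.
- by rewrite -subr_eq0 addrC addKr; apply: lt0r_neq0.
- apply: He; rewrite /ball /= opprD addrA subrr sub0r normrN gtr0_norm //.
  by rewrite ltr_pdivrMr // ltr_pMr // ltr1n.
Qed.

Lemma pes_exists_gen (R : realType) : exists psi : R[i]^o -> (nat -> bool),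
  forall P : set R[i]^o, perfect_subset P -> forall b, exists z, P z /\ psi z = b.
Proof.
apply: (@bernstein (R[i]^o) (nat -> bool) perfect_subset (fun _ => false) 0).
move=> P [[p0 Pp0] [Pcl Plim]].
pose g (x : R[i]^o) := let b := xget (fun _ => false) [set b | kap P p0 b = x] in
  (@decC R (split2 b 0), split2 b 1).
exists g => P' d [_ [P'cl _]].
have [b1 hb1] := decC_onto P'cl.
pose b := merge (fun j => if j == 0%N then b1 else d).
exists (kap P p0 b); split; first exact: kapP.
rewrite /g /=.
have : [set b' | kap P p0 b' = kap P p0 b] (xget (fun _ => false) [set b' | kap P p0 b' = kap P p0 b]).
  by apply: xgetPex; exists b.
move=> /= /(kap_inj Plim Pp0) ->.
by rewrite /b !split2_merge hb1.
Qed.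

Unset Implicit Arguments.
Theorem theorem3p5 (R : realType) :
  strongly_algebrable (set R[i]) (@PES (R[i])^o).
Proof.
have [psi Hpsi] := pes_exists_gen R.
have HGam := @decoder_gen R; set Gam := @Gam R in HGam.
exists (fun A (z : R[i]^o) => Gam (psi z) A : R[i]); split.
  move=> A B eAB; apply: contrapT => nAB.
  pose a (i : 'I_2) := if i == ord0 then A else B.
  have ia : injective a.
    move=> [[|[|i]] Hi] [[|[|j]] Hj] //; rewrite /a /= => e;
    first [by apply/val_inj | by case: nAB | by case: nAB; rewrite e | done].
  have [b Hb] := HGam 2 a ia (fun i => if i == ord0 then 0 else 1).
  have [z [_ pz]] := Hpsi _ (perfectT_gen R) b.
  have := congr1 (fun g => g z) eAB => /=.
  rewrite pz; move: (Hb ord0) (Hb (lift ord0 ord0)) => /=.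
  by rewrite /a /= => -> -> /eqP; rewrite eq_sym oner_eq0.
move=> n a ia s us nz hs /=.
set f := fun z => _.
have key : forall w, exists b, forall z, psi z = b -> f z = w.
  move=> w; have [v Hv] := poly_surj_gen us nz hs w.
  have [b Hb] := HGam n a ia v.
  exists b => z pz; rewrite /f -Hv; apply: eq_bigr => p _; congr (_ * _).
  by rewrite /monomial; apply: eq_bigr => i _; rewrite pz Hb.
have pesf : PES f.
  move=> P PP; apply/seteqP; split => // w _.
  have [b Hb] := key w; have [z [Pz pz]] := Hpsi P PP b.
  by exists z => //; apply: Hb.
split => // f0.
have [b Hb] := key 1; have [z [_ pz]] := Hpsi _ (perfectT_gen R) b.
by have := Hb z pz; rewrite f0 => /eqP; rewrite eq_sym oner_eq0.
Qed.
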